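(* Consider $\dot x=f(x,u)$ with $x\in\mathbb{R}^n$, $f:\mathbb{R}^n\times\mathbb{R}^m\to\mathbb{R}^n$ continuous, $f(0,0)=0$, and suppose $V:\mathbb{R}^n\to\mathbb{R}_{\ge0}$ is a FxT-ISS Lyapunov function for this system. Let $\gamma\in\mathcal{K}^{\mathcal{P}^{-1}}$. Then there exists $\lambda\ge1$ such that $\tilde V(x)=\gamma^\lambda(V(x))=(\gamma(V(x)))^\lambda$ is a FxT-ISS Lyapunov function for the system.
   Context: $\mathcal{K}_\infty$: continuous strictly increasing unbounded $\alpha:\mathbb{R}_{\ge0}\to\mathbb{R}_{\ge0}$ with $\alpha(0)=0$. $\mathcal{K}^{\mathcal{P}}$: the $\alpha\in\mathcal{K}_\infty$ of the form $\sum_{i=1}^nc_is^{p_i}$ with real $c_i\ne0$, $p_i>0$, and $\alpha'(s)>0$ for $s>0$. $\mathcal{K}^{\mathcal{P}^{-1}}$: the $\alpha\in\mathcal{K}_\infty$ with $\alpha^{-1}\in\mathcal{K}^{\mathcal{P}}$. $\mathcal{K}_{\mathrm{FxT}}$: functions $c_1s^{p_1}+c_2s^{p_2}$ with $c_1,c_2>0$, $p_1\in(0,1)$, $p_2>1$. A locally Lipschitz $V:\mathbb{R}^n\to\mathbb{R}_{\ge0}$ is a FxT-ISS Lyapunov function for $\dot x=f(x,u)$ if there exist $\underline\alpha,\overline\alpha,\chi\in\mathcal{K}_\infty$ and $\Psi\in\mathcal{K}_{\mathrm{FxT}}$ with $\underline\alpha(|x|)\le V(x)\le\overline\alpha(|x|)$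 for all $x$ and, for all $x,u$, $V(x)\ge\chi(|u|)\implies DV(x;f(x,u))\le-\Psi(V(x))$, where $DV(x;v)=\limsup_{h\to0^+}\frac{V(x+hv)-V(x)}{h}$. *)

(* Defs.v *)
From HB Require Import structures.
From mathcomp Require Import all_boot all_order all_algebra.
From mathcomp Require Import all_classical all_reals all_analysis.
Set Implicit Arguments. Unset Strict Implicit. Unset Printing Implicit Defensive.
Import Order.TTheory GRing.Theory Num.Theory.
Import numFieldNormedType.Exports.
Local Open Scope classical_set_scope.
Local Open Scope ring_scope.

Section Defs.
Variable R : realType.

Definition enorm (k : nat) (v : 'rV[R]_k) : R :=
  Num.sqrt (\sum_(i < k) (v ord0 i) ^+ 2).

(* class K_infinity, for functions on R>=0 (values on negatives irrelevant) *)
Definition Kinf (a : R -> R) : Prop :=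
  [/\ a 0 = 0,
      {within `[0, +oo[, continuous a},
      (forall s t, 0 <= s -> s < t -> a s < a t) &
      (forall M, exists2 s, 0 <= s & M < a s)].

Definition KP (a : R -> R) : Prop :=
  Kinf a /\
  exists (N : nat) (c : 'I_N -> R) (p : 'I_N -> R),
    [/\ (forall i, c i != 0), (forall i, 0 < p i),
        (forall s, 0 <= s -> a s = \sum_(i < N) c i * powR s (p i)) &
        (forall s, 0 < s -> derivable a s 1 /\ 0 < derive1 a s)].

Definition KPinv (a : R -> R) : Prop :=
  Kinf a /\
  exists2 b : R -> R, KP b &
    (forall s, 0 <= s -> b (a s) = s) /\ (forall s, 0 <= s -> a (b s) = s).

Definition KFxT (psi : R -> R) : Prop :=
  exists c1 c2 p1 p2 : R,
    [/\ 0 < c1, 0 < c2, 0 < p1 < 1, 1 < p2 &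
        forall s, 0 <= s -> psi s = c1 * powR s p1 + c2 * powR s p2].

Definition locally_lipschitz (n : nat) (V : 'rV[R]_n -> R) : Prop :=
  forall x, exists r : R, exists L : R, 0 < r /\
    forall y z, enorm (y - x) < r -> enorm (z - x) < r ->
      `|V y - V z| <= L * enorm (y - z).

Definition dini (n : nat) (V : 'rV[R]_n -> R) (x v : 'rV[R]_n) : \bar R :=
  limf_esup (fun h : R => ((V (x + h *: v) - V x) / h)%:E) (0^'+).

Definition FxT_ISS_Lyapunov (n m : nat) (f : 'rV[R]_n -> 'rV[R]_m -> 'rV[R]_n)
  (V : 'rV[R]_n -> R) : Prop :=
  (forall x, 0 <= V x) /\ locally_lipschitz V /\
  exists al ah chi psi : R -> R,
    [/\ Kinf al, Kinf ah, Kinf chi, KFxT psi &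
        (forall x, al (enorm x) <= V x /\ V x <= ah (enorm x)) /\
        (forall x u, chi (enorm u) <= V x ->
           (dini V x (f x u) <= (- psi (V x))%:E)%E)].

End Defs.

(* Main.v *)
Require Import Defs.
From HB Require Import structures.
From mathcomp Require Import all_boot all_order all_algebra.
From mathcomp Require Import all_classical all_reals all_analysis.
From mathcomp Require Import ring lra.
Import Order.TTheory GRing.Theory Num.Theory.
Import numFieldNormedType.Exports.
Local Open Scope classical_set_scope.
Local Open Scope ring_scope.
Set Implicit Arguments. Unset Strict Implicit. Unset Printing Implicit Defensive.

Section H1.
Variable R : realType.

Lemma withinP (A : set R) (f : R -> R) :
  {within A, continuous f} <->
  (forall x, A x -> forall e, 0 < e -> exists2 d, 0 < d &
     forall y, A y -> `|y - x| < d -> `|f y - f x| < e).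
Proof.
split.
- move=> /subspace_continuousP cf x x0 e e0.
  have := cf x x0.
  move=> /cvgrPdist_lt /(_ e e0); rewrite near_withinE => /nbhs_ballP [d /= d0 H].
  exists d => // y y0 yx; rewrite distrC; apply: H => //.
  by rewrite /ball /= distrC.
- move=> H; apply/subspace_continuousP => x x0.
  apply/cvgrPdist_lt => e e0; rewrite near_withinE; apply/nbhs_ballP.
  have [d d0 Hd] := H x x0 e e0; exists d => // y /= bxy y0.
  rewrite distrC; apply: Hd => //.
  by rewrite distrC.
Qed.

Lemma esup_le (g : R -> R) c d : 0 < d ->
  (forall h, 0 < h -> h < d -> g h <= c) ->
  (limf_esup (fun h => (g h)%:E) (0^'+) <= c%:E)%E.
Proof.
move=> d0 H; rewrite limf_esupE.
apply: (@le_trans _ _ (ereal_sup ((fun h => (g h)%:E) @` [set h | 0 < h < d]))).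
  apply: ereal_inf_lbound; exists [set h | 0 < h < d] => //.
  change (\forall h \near 0^'+, 0 < h < d).
  rewrite near_withinE; apply/nbhs_ballP; exists d => //= y.
  rewrite /ball /= sub0r normrN => yd y0; rewrite y0 /=.
  by rewrite (le_lt_trans _ yd)// ler_norm.
apply: ub_ereal_sup => _ [h /andP[h0 hd] <-]; rewrite lee_fin; exact: H.
Qed.

Lemma esup_lt (g : R -> R) c :
  (limf_esup (fun h => (g h)%:E) (0^'+) <= c%:E)%E ->
  forall e, 0 < e -> exists2 d, 0 < d & forall h, 0 < h -> h < d -> g h < c + e.
Proof.
move=> H e e0.
have : (limf_esup (fun h => (g h)%:E) (0^'+) < (c + e)%:E)%E.
  by rewrite (le_lt_trans H)// lte_fin ltrDl.
rewrite limf_esupE => /ereal_inf_lt [_ [A FA <-]] /=.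
move: FA; change (0^'+ A) with (\forall h \near 0^'+, A h); rewrite near_withinE => /nbhs_ballP [d /= d0 HA] Hsup.
exists d => // h h0 hd.
rewrite -lte_fin; apply: le_lt_trans Hsup.
apply: ereal_sup_ubound; exists h => //; apply: HA => //.
by rewrite /ball /= sub0r normrN gtr0_norm.
Qed.

Lemma deriv_eps (f : R -> R) t : derivable f t 1 ->
  forall eta, 0 < eta -> exists2 rho, 0 < rho & forall tau, `|tau - t| < rho ->
    `|f tau - f t - derive1 f t * (tau - t)| <= eta * `|tau - t|.
Proof.
move=> df eta eta0.
move: df; rewrite /derivable -/(derive _ _ _) -derive1E.
move=> /cvgrPdist_lt H0; have := H0 eta eta0; rewrite near_withinE => /nbhs_ballP [d /= d0 H].
exists d => // tau taut.
have [->|tt] := eqVneq tau t.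
  by rewrite !subrr mulr0 normr0 subrr normr0 mulr0.
have := H (tau - t); rewrite /ball /= sub0r normrN => /(_ taut).
rewrite subr_eq0 => /(_ tt) /=.
have -> : (tau - t)%:A + t = tau by rewrite /GRing.scale /= mulr1 subrK.
rewrite -[_ *: _]/(_ * _) => /ltW.
have h0 : `|tau - t| != 0 by rewrite normr_eq0 subr_eq0.
have ht : tau - t != 0 by rewrite subr_eq0.
move=> Hle.
have -> : f tau - f t - derive1 f t * (tau - t) =
   - ((tau - t) * (derive1 f t - (tau - t)^-1 * (f tau - f t))).
  by field.
rewrite normrN normrM mulrC ler_pM2r ?normr_gt0 //.
Qed.

End H1.


Section H2.
Variable R : realType.

Lemma enormZ k (h : R) (v : 'rV[R]_k) : enorm (h *: v) = `|h| * enorm v.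
Proof.
rewrite /enorm.
have -> : \sum_(i < k) ((h *: v) ord0 i) ^+ 2 = h ^+ 2 * \sum_(i < k) (v ord0 i) ^+ 2.
  by rewrite big_distrr /=; apply: eq_bigr => i _; rewrite mxE exprMn.
by rewrite sqrtrM ?sqr_ge0 // sqrtr_sqr.
Qed.

Lemma enorm_ge0 k (v : 'rV[R]_k) : 0 <= enorm v.
Proof. exact: sqrtr_ge0. Qed.

Lemma enorm0 k : enorm (0 : 'rV[R]_k) = 0.
Proof.
rewrite /enorm big1 ?sqrtr0 // => i _; by rewrite mxE expr0n.
Qed.

Lemma powR_within (a : R) : 0 < a -> {within `[0, +oo[, continuous (fun x => powR x a)}.
Proof.
move=> a0; apply/continuous_within_itvcyP; split.
  move=> x; rewrite in_itv /= andbT => x0.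
  apply: differentiable_continuous; apply/derivable1_diffP.
  by apply: derivable_powR; rewrite in_itv /= x0.
by rewrite powR0 ?gt_eqF //; exact: powR_cvg0.
Qed.

Lemma Kinf_ge0 (a : R -> R) s : Kinf a -> 0 <= s -> 0 <= a s.
Proof.
case=> a0 _ ainc _; rewrite le_eqVlt => /predU1P [<-|s0]; first by rewrite a0.
by rewrite -a0 ltW // ainc.
Qed.

Lemma Kinf_le (a : R -> R) s t : Kinf a -> 0 <= s -> s <= t -> a s <= a t.
Proof.
case=> a0 _ ainc _ s0; rewrite le_eqVlt => /predU1P [<-//|st].
by rewrite ltW // ainc.
Qed.

Lemma Kinf_lt (a : R -> R) s t : Kinf a -> 0 <= s -> s < t -> a s < a t.
Proof. by case=> a0 _ ainc _ s0 st; apply: ainc. Qed.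

Lemma Kinf_le_rev (a : R -> R) s t : Kinf a -> 0 <= t -> a s <= a t -> s <= t.
Proof.
move=> Ka t0 ast; rewrite leNgt; apply/negP => ts.
by move: (Kinf_lt Ka t0 ts); rewrite ltNge ast.
Qed.


Lemma Kinf_comp (g a : R -> R) lam : Kinf g -> Kinf a -> 1 <= lam ->
  Kinf (fun s => powR (g (a s)) lam).
Proof.
move=> Kg Ka lam1.
have lam0 : 0 < lam by rewrite (lt_le_trans ltr01).
split.
- by case: Ka => -> _ _ _; case: Kg => -> _ _ _; rewrite powR0 // gt_eqF.
- have := powR_within lam0; move/withinP => Hp.
  case: (Kg) => _ /withinP Hg _ _; case: (Ka) => _ /withinP Ha _ _.
  apply/withinP => x; rewrite /= in_itv /= andbT => x0 e e0.
  have ax0 : 0 <= a x by apply: Kinf_ge0.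
  have gax0 : 0 <= g (a x) by apply: Kinf_ge0.
  have [d1 d10 H1] := Hp (g (a x)) (ltac:(by rewrite /= in_itv /= andbT)) e e0.
  have [d2 d20 H2] := Hg (a x) (ltac:(by rewrite /= in_itv /= andbT)) d1 d10.
  have [d3 d30 H3] := Ha x (ltac:(by rewrite /= in_itv /= andbT)) d2 d20.
  exists d3 => // y; rewrite /= in_itv /= andbT => y0 yx.
  have ay0 : 0 <= a y by apply: Kinf_ge0.
  have gay0 : 0 <= g (a y) by apply: Kinf_ge0.
  apply: H1; first by rewrite /= in_itv /= andbT.
  apply: H2; first by rewrite /= in_itv /= andbT.
  by apply: H3 => //; rewrite /= in_itv /= andbT.
- move=> s t s0 st.
  have as0 : 0 <= a s by apply: Kinf_ge0.
  have gas0 : 0 <= g (a s) by apply: Kinf_ge0.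
  apply: gt0_ltr_powR => //; rewrite ?nnegrE //.
    by apply: Kinf_ge0 => //; apply: Kinf_ge0 => //; rewrite (le_trans s0) // ltW.
  by apply: Kinf_lt => //; apply: Kinf_lt.
- move=> M.
  case: (Kg) => _ _ _ /(_ (Num.max M 1)) [v v0 Mv].
  case: (Ka) => _ _ _ /(_ v) [s s0 vs].
  exists s => //.
  have gv : g v < g (a s) by apply: Kinf_lt.
  have h1 : 1 <= g (a s).
    by rewrite ltW // (le_lt_trans _ (lt_trans Mv gv)) // le_max lexx orbT.
  apply: (lt_le_trans _ (le1r_powR h1 lam1)).
  by rewrite (le_lt_trans _ (lt_trans Mv gv)) // le_max lexx.
Qed.

End H2.


Section H3.
Variable R : realType.

Definition Cf N (c p : 'I_N -> R) (e : R) := \sum_(i < N | p i == e) c i.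
Definition Sf N (c p : 'I_N -> R) :=
  [seq e <- undup [seq p i | i <- enum 'I_N] | Cf c p e != 0].

Lemma regroup N (c p : 'I_N -> R) (g : R -> R) :
  \sum_(i < N) c i * g (p i) = \sum_(e <- Sf c p) Cf c p e * g e.
Proof.
rewrite /Sf big_filter [RHS]big_mkcond /=.
have -> : \sum_(e <- undup [seq p i | i <- enum 'I_N])
     (if Cf c p e != 0 then Cf c p e * g e else 0) =
   \sum_(e <- undup [seq p i | i <- enum 'I_N]) Cf c p e * g e.
  by apply: eq_bigr => e _; case: eqP => // ->; rewrite mul0r.
under [RHS]eq_bigr do rewrite /Cf big_distrl /= big_mkcond /=.
rewrite exchange_big /=; apply: eq_bigr => i _.
have pin : p i \in undup [seq p i | i <- enum 'I_N].
  by rewrite mem_undup; apply/mapP; exists i; rewrite ?mem_enum.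
rewrite (bigD1_seq (p i)) ?undup_uniq //= eqxx big1 ?addr0 //.
by move=> e; rewrite eq_sym => /negbTE ->.
Qed.

Lemma Sf_uniq N (c p : 'I_N -> R) : uniq (Sf c p).
Proof. by rewrite /Sf filter_uniq // undup_uniq. Qed.

Lemma Sf_C N (c p : 'I_N -> R) e : e \in Sf c p -> Cf c p e != 0.
Proof. by rewrite /Sf mem_filter => /andP []. Qed.

Lemma Sf_pos N (c p : 'I_N -> R) e : (forall i, 0 < p i) -> e \in Sf c p -> 0 < e.
Proof.
move=> pp; rewrite /Sf mem_filter => /andP [_]; rewrite mem_undup.
by move=> /mapP [i _ ->].
Qed.

Lemma small_sum (r : seq R) (a d : R -> R) (P : pred R) :
  (forall e, e \in r -> P e -> 0 < d e) -> forall eps, 0 < eps ->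
  exists2 t0, 0 < t0 & forall t, 0 < t -> t <= t0 ->
    \sum_(e <- r | P e) `|a e| * powR t (d e) <= eps.
Proof.
elim: r => [|x r IH] Hd eps eps0.
  by exists 1 => // t _ _; rewrite big_nil ltW.
have Hd' : forall e, e \in r -> P e -> 0 < d e.
  by move=> e er; apply: Hd; rewrite inE er orbT.
have e2 : 0 < eps / 2 by lra.
have [t0 t00 Ht0] := IH Hd' (eps / 2) e2.
case Px: (P x); last first.
  exists t0 => // t t0' tt0; rewrite big_cons Px.
  have := Ht0 t t0' tt0; lra.
have dx0 : 0 < d x by apply: Hd => //; rewrite mem_head.
set eta := eps / 2 / (`|a x| + 1).
have eta0 : 0 < eta by rewrite divr_gt0 ?divr_gt0 // ltr_wpDl.
exists (Num.min t0 (powR eta (d x)^-1)).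
  by rewrite lt_min t00 powR_gt0.
move=> t t0' ; rewrite le_min => /andP [tt0 tt1].
rewrite big_cons Px.
have h1 : powR t (d x) <= eta.
  have -> : eta = powR (powR eta (d x)^-1) (d x).
    by rewrite -powRrM mulVf ?gt_eqF // powRr1 // ltW.
  by apply: (ge0_ler_powR (ltW dx0)); rewrite ?nnegrE ?powR_ge0 // ltW.
have h2 : `|a x| * powR t (d x) <= eps / 2.
  apply: (le_trans (ler_wpM2l (normr_ge0 _) h1)).
  have a1 : 0 < `|a x| + 1 by rewrite ltr_wpDl.
  have r1 : `|a x| / (`|a x| + 1) <= 1 by rewrite ler_pdivrMr // mul1r lerDl.
  have -> : `|a x| * eta = eps / 2 * (`|a x| / (`|a x| + 1)).
    by rewrite /eta; field; rewrite gt_eqF.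
  by rewrite ler_piMr // ?divr_ge0 // ltW.
have h3 := Ht0 t t0' tt0.
lra.
Qed.

Lemma powR_oppV (t x : R) : 0 < t -> powR t (- x) = powR t^-1 x.
Proof.
move=> t0; rewrite /powR (gt_eqF t0) gt_eqF ?invr_gt0 //.
by rewrite lnV ?posrE // mulrN mulNr.
Qed.

Lemma lead0 (S : seq R) (A : R -> R) Pm : uniq S -> Pm \in S ->
  (forall e, e \in S -> Pm <= e) ->
  forall eps, 0 < eps -> exists2 t0, 0 < t0 & forall t, 0 < t -> t <= t0 ->
   `|\sum_(e <- S) A e * powR t e - A Pm * powR t Pm| <= eps * powR t Pm.
Proof.
move=> uS PS Pmin eps eps0.
have [|t0 t00 Ht0] := @small_sum S A (fun e => e - Pm) (fun e => e != Pm) _ eps eps0.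
  by move=> e eS ePm; rewrite subr_gt0 lt_neqAle eq_sym ePm Pmin.
exists t0 => // t t0' tt0.
rewrite (bigD1_seq Pm) //= addrAC subrr add0r.
apply: le_trans (ler_norm_sum _ _ _) _.
have -> : \sum_(e <- S | e != Pm) `|A e * powR t e| =
    (\sum_(e <- S | e != Pm) `|A e| * powR t (e - Pm)) * powR t Pm.
  rewrite big_distrl /=; apply: eq_bigr => e _.
  rewrite normrM (ger0_norm (powR_ge0 _ _)) -mulrA -powRD ?subrK //.
  by apply/implyP => _; rewrite gt_eqF.
by rewrite ler_wpM2r ?powR_ge0 // Ht0.
Qed.

Lemma leadoo (S : seq R) (A : R -> R) Qm : uniq S -> Qm \in S ->
  (forall e, e \in S -> e <= Qm) ->
  forall eps, 0 < eps -> exists2 T0, 1 <= T0 & forall t, T0 <= t ->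
   `|\sum_(e <- S) A e * powR t e - A Qm * powR t Qm| <= eps * powR t Qm.
Proof.
move=> uS QS Qmax eps eps0.
have [|t0 t00 Ht0] := @small_sum S A (fun e => Qm - e) (fun e => e != Qm) _ eps eps0.
  by move=> e eS eQm; rewrite subr_gt0 lt_neqAle eQm Qmax.
exists (Num.max 1 t0^-1); first by rewrite le_max lexx.
move=> t; rewrite ge_max => /andP [t1 tt0].
have t0' : 0 < t by rewrite (lt_le_trans ltr01).
rewrite (bigD1_seq Qm) //= addrAC subrr add0r.
apply: le_trans (ler_norm_sum _ _ _) _.
have -> : \sum_(e <- S | e != Qm) `|A e * powR t e| =
    (\sum_(e <- S | e != Qm) `|A e| * powR t^-1 (Qm - e)) * powR t Qm.
  rewrite big_distrl /=; apply: eq_bigr => e _.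
  rewrite normrM (ger0_norm (powR_ge0 _ _)) -mulrA -powR_oppV // opprB.
  rewrite -powRD ?subrK //.
  by apply/implyP => _; rewrite gt_eqF.
rewrite ler_wpM2r ?powR_ge0 // Ht0 ?invr_gt0 //.
by rewrite invf_ple ?posrE.
Qed.

End H3.


Section H4.
Variable R : realType.

Lemma seq_min (s : seq R) : s != [::] -> exists2 m, m \in s & forall e, e \in s -> m <= e.
Proof.
elim: s => [//|x s IH] _.
case: s IH => [|y s] IH.
  by exists x; rewrite ?mem_head // => e; rewrite inE => /eqP ->.
have [//|m ms Hm] := IH.
exists (Num.min x m).
  by rewrite /Num.min; case: ifP => _; rewrite inE ?eqxx // ms orbT.
move=> e; rewrite inE => /predU1P [->|es]; first by rewrite ge_min lexx.
by rewrite ge_min Hm ?orbT.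
Qed.

Lemma seq_max (s : seq R) : s != [::] -> exists2 m, m \in s & forall e, e \in s -> e <= m.
Proof.
elim: s => [//|x s IH] _.
case: s IH => [|y s] IH.
  by exists x; rewrite ?mem_head // => e; rewrite inE => /eqP ->.
have [//|m ms Hm] := IH.
exists (Num.max x m).
  by rewrite /Num.max; case: ifP => _; rewrite inE ?eqxx // ms orbT.
move=> e; rewrite inE => /predU1P [->|es]; first by rewrite le_max lexx.
by rewrite le_max Hm ?orbT.
Qed.

Lemma KP_deriv (b : R -> R) N (c p : 'I_N -> R) :
  (forall i, 0 < p i) -> (forall s, 0 <= s -> b s = \sum_(i < N) c i * powR s (p i)) ->
  forall t, 0 < t -> t * derive1 b t = \sum_(i < N) c i * (p i * powR t (p i)).
Proof.
move=> pp Hb t t0.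
rewrite derive1E.
have -> : 'D_1 b t = 'D_1 (\sum_(i < N) (fun s => c i * powR s (p i))) t.
  apply: near_eq_derive; near=> s; rewrite fct_sumE; apply: Hb.
  by apply: ltW; near: s; exact: lt_nbhsr.
have Hd : forall i, is_derive t 1 (fun s => c i * powR s (p i)) (c i * (p i * powR t (p i - 1))).
  move=> i.
  exact: (@is_deriveZ _ _ _ (fun s => powR s (p i)) (c i) t 1 _ (is_derive1_powR (p i) t0)).
rewrite derive_sum; last by move=> i; exact: (Hd i).(ex_derive).
rewrite big_distrr /=; apply: eq_bigr => i _.
rewrite (Hd i).(derive_val) mulrCA; congr (_ * _).
by rewrite mulrCA mulr_powRB1 // ltW.
Unshelve. all: end_near. Qed.

Lemma L_pos (B a w : R) : 0 < w -> 0 < B -> a != 0 ->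
  `|B - a * w| <= `|a| / 2 * w -> 0 < a.
Proof.
move=> w0 B0 a0 H; rewrite lt_neqAle eq_sym a0 /=; rewrite leNgt; apply/negP => an.
move: H; rewrite (ltr0_norm an) => H.
have := le_trans (ler_norm _) H; nra.
Qed.

Lemma L_low (B a w eps : R) : `|B - a * w| <= eps * w -> (a - eps) * w <= B.
Proof.
move=> H; rewrite -normrN opprB in H; have := le_trans (ler_norm _) H; nra.
Qed.

Lemma powR_le1 (t P : R) : 0 < t -> t <= 1 -> 0 <= P -> powR t P <= 1.
Proof.
move=> t0 t1 P0; rewrite -(powRr0 t); apply: ger_powR => //; by rewrite t0 t1.
Qed.

Lemma GP (b : R -> R) : KP b -> exists P Q k M : R,
  [/\ 0 < P, P <= Q, 0 < k, 0 < M &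
  [/\ (forall t, 0 < t -> t <= 1 -> k * powR t P <= b t),
      (forall t, 1 <= t -> k * powR t Q <= b t),
      (forall t, 0 < t -> t <= 1 -> t * derive1 b t <= M * powR t P),
      (forall t, 1 <= t -> t * derive1 b t <= M * powR t Q) &
      (forall T, 0 < T -> exists2 kap, 0 < kap &
         forall t, 0 < t -> t <= T -> kap * powR t P <= t * derive1 b t)]].
Proof.
case=> Kb [N [c [p [cn0 pp Hb Hd]]]].
pose S := Sf c p; pose C := Cf c p.
have HB : forall t, 0 <= t -> b t = \sum_(e <- S) C e * powR t e.
  by move=> t t0; rewrite Hb //; exact: (regroup c p (fun e => powR t e)).
have HD : forall t, 0 < t -> t * derive1 b t = \sum_(e <- S) C e * (e * powR t e).
  by move=> t t0; rewrite (KP_deriv pp Hb t0); exact: (regroup c p (fun e => e * powR t e)).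
have uS : uniq S := Sf_uniq c p.
have Spos : forall e, e \in S -> 0 < e by move=> e; exact: Sf_pos.
have SC : forall e, e \in S -> C e != 0 by move=> e; exact: Sf_C.
have bpos : forall t, 0 < t -> 0 < b t.
  by move=> t t0; case: (Kb) => b0 _ binc _; rewrite -b0; apply: binc.
have Dpos : forall t, 0 < t -> 0 < t * derive1 b t.
  by move=> t t0; rewrite mulr_gt0 //; case: (Hd t t0).
have Sn0 : S != [::].
  apply/eqP => S0; have := bpos 1 ltr01; rewrite HB ?ler01 // S0 big_nil ltxx.
  by [].
have [P PS Pmin] := seq_min Sn0.
have [Q QS Qmax] := seq_max Sn0.
have P0 := Spos P PS.
have PQ : P <= Q := Qmax P PS.
have CP : 0 < C P.
  have e0 : 0 < `|C P| / 2 by rewrite divr_gt0 // normr_gt0 SC.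
  have [t0 t00 Ht0] := lead0 C uS PS Pmin e0.
  have := Ht0 t0 t00 (lexx _); rewrite -HB; last exact: ltW.
  by apply: L_pos; rewrite ?powR_gt0 ?bpos ?SC.
have CQ : 0 < C Q.
  have e0 : 0 < `|C Q| / 2 by rewrite divr_gt0 // normr_gt0 SC.
  have [T0 T01 HT0] := leadoo C uS QS Qmax e0.
  have T00 : 0 < T0 by rewrite (lt_le_trans ltr01).
  have := HT0 T0 (lexx _); rewrite -HB; last exact: ltW.
  by apply: L_pos; rewrite ?powR_gt0 ?bpos ?SC.
have [k1 k10 Hk1] : exists2 k1, 0 < k1 & forall t, 0 < t -> t <= 1 -> k1 * powR t P <= b t.
  have e0 : 0 < C P / 2 by rewrite divr_gt0.
  have [t0 t00 Ht0] := lead0 C uS PS Pmin e0.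
  pose t1 := Num.min t0 1.
  have t10 : 0 < t1 by rewrite lt_min t00 ltr01.
  exists (Num.min (C P / 2) (b t1)); first by rewrite lt_min e0 bpos.
  move=> t tp t1'.
  have [tt0|tt0] := leP t t0.
  - have := L_low (Ht0 t tp tt0); rewrite -HB; last exact: ltW.
    apply: le_trans; apply: ler_wpM2r; first exact: powR_ge0.
    by rewrite ge_min; apply/orP; left; rewrite le_eqVlt; apply/orP; left; apply/eqP; field.
  - have bt : b t1 <= b t.
      apply: Kinf_le => //; first exact: ltW.
      by rewrite ge_min (ltW tt0).
    have tP : powR t P <= 1 by apply: powR_le1 => //; exact: ltW.
    apply: (le_trans (y := b t1 * powR t P)).
      by apply: ler_wpM2r; [exact: powR_ge0 | rewrite ge_min lexx orbT].
    by apply: (le_trans _ bt); apply: ler_piMr => //; apply: ltW; apply: bpos.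
have [k2 k20 Hk2] : exists2 k2, 0 < k2 & forall t, 1 <= t -> k2 * powR t Q <= b t.
  have e0 : 0 < C Q / 2 by rewrite divr_gt0.
  have [T0 T01 HT0] := leadoo C uS QS Qmax e0.
  have T00 : 0 < T0 by rewrite (lt_le_trans ltr01).
  have Q0 : 0 < Q by rewrite (lt_le_trans P0).
  have TQ : 0 < powR T0 Q by apply: powR_gt0.
  exists (Num.min (C Q / 2) (b 1 / powR T0 Q)).
    by rewrite lt_min e0 divr_gt0 // bpos.
  move=> t t1.
  have tp : 0 < t by rewrite (lt_le_trans ltr01).
  have [tT|tT] := leP T0 t.
  - have := L_low (HT0 t tT); rewrite -HB; last exact: ltW.
    apply: le_trans; apply: ler_wpM2r; first exact: powR_ge0.
    by rewrite ge_min; apply/orP; left; rewrite le_eqVlt; apply/orP; left; apply/eqP; field.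
  - have bt : b 1 <= b t by apply: Kinf_le => //; exact: ler01.
    have tQ : powR t Q <= powR T0 Q.
      by apply: (ge0_ler_powR (ltW Q0)); rewrite ?nnegrE; [exact: ltW | exact: ltW | exact: ltW].
    apply: (le_trans (y := b 1 / powR T0 Q * powR t Q)).
      by apply: ler_wpM2r; [exact: powR_ge0 | rewrite ge_min lexx orbT].
    apply: (le_trans _ bt).
    rewrite -mulrA; apply: ler_piMr; first exact/ltW/bpos.
    by rewrite mulrC ler_pdivrMr // mul1r.
pose M := 1 + \sum_(e <- S) `|C e| * e.
have M0 : 0 < M.
  rewrite /M ltr_pwDl // big_seq sumr_ge0 // => e eS.
  by rewrite mulr_ge0 // ltW // Spos.
exists P, Q, (Num.min k1 k2), M; split => //; first by rewrite lt_min k10 k20.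
split.
- move=> t t0 t1; apply: le_trans (Hk1 t t0 t1).
  by rewrite ler_wpM2r ?powR_ge0 // ge_min lexx.
- move=> t t1; apply: le_trans (Hk2 t t1).
  by rewrite ler_wpM2r ?powR_ge0 // ge_min lexx orbT.
- move=> t t0 t1; rewrite HD //.
  apply: (@le_trans _ _ (\sum_(e <- S) `|C e| * e * powR t P)).
    rewrite [X in X <= _]big_seq [X in _ <= X]big_seq; apply: ler_sum => e eS.
    have e0 := Spos e eS.
    have h1 : powR t e <= powR t P by apply: ger_powR; [rewrite t0 t1 | apply: Pmin].
    apply: (le_trans (y := `|C e| * (e * powR t e))).
      by apply: ler_wpM2r; [rewrite mulr_ge0 ?powR_ge0 // ltW | exact: ler_norm].
    by rewrite -mulrA ler_wpM2l // ler_wpM2l // ltW.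
  rewrite -big_distrl /= ler_wpM2r ?powR_ge0 // /M lerDr //.
- move=> t t1; have t0 : 0 < t by rewrite (lt_le_trans ltr01).
  rewrite HD //.
  apply: (@le_trans _ _ (\sum_(e <- S) `|C e| * e * powR t Q)).
    rewrite [X in X <= _]big_seq [X in _ <= X]big_seq; apply: ler_sum => e eS.
    have e0 := Spos e eS.
    have h1 : powR t e <= powR t Q by apply: ler_powR => //; apply: Qmax.
    apply: (le_trans (y := `|C e| * (e * powR t e))).
      by apply: ler_wpM2r; [rewrite mulr_ge0 ?powR_ge0 // ltW | exact: ler_norm].
    by rewrite -mulrA ler_wpM2l // ler_wpM2l // ltW.
  rewrite -big_distrl /= ler_wpM2r ?powR_ge0 // /M lerDr //.
- move=> T T0.
  have e0 : 0 < C P * P / 2 by rewrite divr_gt0 // mulr_gt0.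
  have [t2 t20 Ht2] := lead0 (fun e => C e * e) uS PS Pmin e0.
  pose T' := Num.max T t2.
  pose F t := \sum_(i < N) c i * (p i * powR t (p i)).
  have HF : forall t, 0 < t -> t * derive1 b t = F t := KP_deriv pp Hb.
  have cF : {within `[t2, T'], continuous F}.
    apply: continuous_subspace_itv => x; rewrite in_itv /= => /andP [x2 _].
    have x0 : 0 < x by rewrite (lt_le_trans t20).
    apply: differentiable_continuous; apply/derivable1_diffP.
    have -> : F = \sum_(i < N) (fun s => c i * (p i * powR s (p i))).
      by apply/funext => s; rewrite fct_sumE.
    apply: derivable_sum => i.
    have -> : (fun s => c i * (p i * powR s (p i))) = (c i * p i) \*: (fun s => powR s (p i)).
      by apply/funext => s; rewrite /= mulrA.
    apply: derivableZ; apply: derivable_powR; by rewrite in_itv /= x0.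
  have t2T : t2 <= T' by rewrite le_max lexx orbT.
  have [m mI Hm] := EVT_min t2T cF.
  move: (mI); rewrite in_itv /= => /andP [m2 mT].
  have m0 : 0 < m by rewrite (lt_le_trans t20).
  have Fm : 0 < F m by rewrite -HF // Dpos.
  have T'0 : 0 < T' by rewrite (lt_le_trans t20).
  have TP : 0 < powR T' P by apply: powR_gt0.
  exists (Num.min (C P * P / 2) (F m / powR T' P)); first by rewrite lt_min e0 divr_gt0.
  move=> t tp tT.
  have [tt2|tt2] := leP t t2.
  - have := L_low (Ht2 t tp tt2).
    have -> : \sum_(e <- S) C e * e * powR t e = t * derive1 b t.
      by rewrite HD //; apply: eq_bigr => e _; rewrite mulrA.
    apply: le_trans; apply: ler_wpM2r; first exact: powR_ge0.
    by rewrite ge_min; apply/orP; left; rewrite le_eqVlt; apply/orP; left; apply/eqP; field.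
  - have Ft : F m <= t * derive1 b t.
      rewrite HF //; apply: Hm; rewrite in_itv /= (ltW tt2) /=.
      by rewrite (le_trans tT) // le_max lexx.
    have tP : powR t P <= powR T' P.
      apply: (ge0_ler_powR (ltW P0)); rewrite ?nnegrE; [exact: ltW | exact: ltW | ].
      by rewrite (le_trans tT) // le_max lexx.
    apply: (le_trans (y := F m / powR T' P * powR t P)).
      by apply: ler_wpM2r; [exact: powR_ge0 | rewrite ge_min lexx orbT].
    apply: (le_trans _ Ft).
    rewrite -mulrA; apply: ler_piMr; first exact: ltW.
    by rewrite mulrC ler_pdivrMr // mul1r.
Qed.

End H4.


Section H6.
Variable R : realType.

Definition qq1 (P p1 : R) := 1 - P * (1 - p1) / (P + 1).
Definition qq2 (P Q p2 : R) := 1 + Q * (p2 - 1) / (P + 1).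
Definition cct (P k M c1 c2 p1 p2 : R) :=
  Num.min ((P + 1) * c1 * powR k p1) ((P + 1) * c2 * powR k p2) / (2 * M).

Lemma powRpow (t a q : R) : powR (powR t a) q = powR t (a * q).
Proof. by rewrite powRrM. Qed.

Lemma psi_bound (b Dt : R -> R) (P Q k M c1 c2 p1 p2 : R) :
  0 < P -> P <= Q -> 0 < k -> 0 < M -> 0 < c1 -> 0 < c2 -> 0 < p1 -> p1 < 1 -> 1 < p2 ->
  (forall t, 0 < t -> t <= 1 -> k * powR t P <= b t) ->
  (forall t, 1 <= t -> k * powR t Q <= b t) ->
  (forall t, 0 < t -> t <= 1 -> Dt t <= M * powR t P) ->
  (forall t, 1 <= t -> Dt t <= M * powR t Q) ->
  forall t, 0 < t -> 0 <= Dt t ->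
  Dt t * (cct P k M c1 c2 p1 p2 * powR (powR t (P + 1)) (qq1 P p1) +
          cct P k M c1 c2 p1 p2 * powR (powR t (P + 1)) (qq2 P Q p2))
  <= (P + 1) * powR t (P + 1) * (c1 * powR (b t) p1 + c2 * powR (b t) p2).
Proof.
move=> P0 PQ k0 M0 c10 c20 p10 p11 p21 l0 loo u0 uoo t t0 D0.
set ct := cct P k M c1 c2 p1 p2.
have lam0 : 0 < P + 1 by rewrite ltr_wpDr // ltW.
have ct0 : 0 <= ct.
  rewrite /ct /cct; apply: divr_ge0; last by rewrite mulr_ge0 // ltW.
  rewrite le_min; apply/andP; split; apply: mulr_ge0; rewrite ?powR_ge0 //;
    by rewrite mulr_ge0 // ltW.
have e1 : (P + 1) * qq1 P p1 = 1 + P * p1 by rewrite /qq1; field; rewrite gt_eqF.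
have e2 : (P + 1) * qq2 P Q p2 = P + 1 + Q * p2 - Q by rewrite /qq2; field; rewrite gt_eqF.
rewrite !powRpow e1 e2.
have tne : t != 0 by rewrite gt_eqF.
have bt0 : 0 <= b t.
  have [t1|t1] := leP t 1.
    by apply: le_trans (l0 t t0 t1); rewrite mulr_ge0 ?powR_ge0 // ltW.
  by apply: le_trans (loo t (ltW t1)); rewrite mulr_ge0 ?powR_ge0 // ltW.
have [t1|t1] := leP t 1.
-
  have Hb := l0 t t0 t1.
  have h1 : powR t (P + 1 + Q * p2 - Q) <= powR t (1 + P * p1).
    apply: ger_powR; first by rewrite t0 t1.
    have : 0 <= Q * (p2 - 1) by rewrite mulr_ge0 // ?subr_ge0 ?ltW // (lt_le_trans P0).
    have : P * p1 <= P by rewrite ler_piMr // ltW.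
    lra.
  have h2 : Dt t * (ct * powR t (1 + P * p1) + ct * powR t (P + 1 + Q * p2 - Q))
            <= M * powR t P * (2 * ct * powR t (1 + P * p1)).
    apply: (le_trans (y := Dt t * (2 * ct * powR t (1 + P * p1)))).
      apply: ler_wpM2l => //.
      have := ler_wpM2l ct0 h1; lra.
    apply: ler_wpM2r; last exact: u0.
    by rewrite mulr_ge0 ?powR_ge0 // mulr_ge0.
  apply: le_trans h2 _.
  have h3 : c1 * powR k p1 * powR t (P * p1) <= c1 * powR (b t) p1 + c2 * powR (b t) p2.
    have : 0 <= c2 * powR (b t) p2 by rewrite mulr_ge0 ?powR_ge0 // ltW.
    have : c1 * powR k p1 * powR t (P * p1) <= c1 * powR (b t) p1.
      rewrite -mulrA; apply: ler_wpM2l; first exact: ltW.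
      rewrite powRrM -powRM; [|exact: ltW|exact: powR_ge0].
      apply: (ge0_ler_powR (ltW p10)); rewrite ?nnegrE //.
        by rewrite mulr_ge0 ?powR_ge0 // ltW.
    lra.
  apply: (le_trans _ (ler_wpM2l _ h3)); last by rewrite mulr_ge0 ?powR_ge0 // ltW.
  have eq1 : powR t P * powR t (1 + P * p1) = powR t (P + 1) * powR t (P * p1).
    by rewrite -!powRD ?tne ?implybT //; congr powR; ring.
  have : 2 * M * ct <= (P + 1) * c1 * powR k p1.
    rewrite /ct /cct mulrC divfK ?mulf_neq0 ?gt_eqF //.
    by rewrite ge_min lexx.
  have pp := powR_ge0 t (P + 1 + P * p1).
  have -> : M * powR t P * (2 * ct * powR t (1 + P * p1)) =
     (2 * M * ct) * (powR t P * powR t (1 + P * p1)) by ring.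
  have -> : (P + 1) * powR t (P + 1) * (c1 * powR k p1 * powR t (P * p1)) =
     ((P + 1) * c1 * powR k p1) * (powR t (P + 1) * powR t (P * p1)) by ring.
  rewrite eq1 => H; apply: ler_wpM2r => //.
  by rewrite mulr_ge0 ?powR_ge0.
-
  have Hb := loo t (ltW t1).
  have h1 : powR t (1 + P * p1) <= powR t (P + 1 + Q * p2 - Q).
    apply: ler_powR; first exact: ltW.
    have : 0 <= Q * (p2 - 1) by rewrite mulr_ge0 // ?subr_ge0 ?ltW // (lt_le_trans P0).
    have : P * p1 <= P by rewrite ler_piMr // ltW.
    lra.
  have h2 : Dt t * (ct * powR t (1 + P * p1) + ct * powR t (P + 1 + Q * p2 - Q))
            <= M * powR t Q * (2 * ct * powR t (P + 1 + Q * p2 - Q)).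
    apply: (le_trans (y := Dt t * (2 * ct * powR t (P + 1 + Q * p2 - Q)))).
      apply: ler_wpM2l => //.
      have := ler_wpM2l ct0 h1; lra.
    apply: ler_wpM2r; last exact: uoo (ltW t1).
    by rewrite mulr_ge0 ?powR_ge0 // mulr_ge0.
  apply: le_trans h2 _.
  have h3 : c2 * powR k p2 * powR t (Q * p2) <= c1 * powR (b t) p1 + c2 * powR (b t) p2.
    have : 0 <= c1 * powR (b t) p1 by rewrite mulr_ge0 ?powR_ge0 // ltW.
    have : c2 * powR k p2 * powR t (Q * p2) <= c2 * powR (b t) p2.
      rewrite -mulrA; apply: ler_wpM2l; first exact: ltW.
      rewrite powRrM -powRM; [|exact: ltW|exact: powR_ge0].
      apply: (ge0_ler_powR (ltW (lt_trans ltr01 p21))); rewrite ?nnegrE //.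
      by rewrite mulr_ge0 ?powR_ge0 // ltW.
    lra.
  apply: (le_trans _ (ler_wpM2l _ h3)); last by rewrite mulr_ge0 ?powR_ge0 // ltW.
  have eq1 : powR t Q * powR t (P + 1 + Q * p2 - Q) = powR t (P + 1) * powR t (Q * p2).
    by rewrite -!powRD ?tne ?implybT //; congr powR; ring.
  have : 2 * M * ct <= (P + 1) * c2 * powR k p2.
    rewrite /ct /cct mulrC divfK ?mulf_neq0 ?gt_eqF //.
    by rewrite ge_min lexx orbT.
  have -> : M * powR t Q * (2 * ct * powR t (P + 1 + Q * p2 - Q)) =
     (2 * M * ct) * (powR t Q * powR t (P + 1 + Q * p2 - Q)) by ring.
  have -> : (P + 1) * powR t (P + 1) * (c2 * powR k p2 * powR t (Q * p2)) =
     ((P + 1) * c2 * powR k p2) * (powR t (P + 1) * powR t (Q * p2)) by ring.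
  rewrite eq1 => H; apply: ler_wpM2r => //.
  by rewrite mulr_ge0 ?powR_ge0.
Qed.

End H6.


Section H5.
Variable R : realType.

Lemma withinZ (A : set R) (f : R -> R) (L : R) :
  {within A, continuous f} -> {within A, continuous (fun x => L * f x)}.
Proof.
move=> /withinP Hf; apply/withinP => x Ax e e0.
have L1 : 0 < `|L| + 1 by rewrite ltr_wpDl.
have [d d0 Hd] := Hf x Ax (e / (`|L| + 1)) (divr_gt0 e0 L1).
exists d => // y Ay yx.
rewrite -mulrBr normrM.
have := Hd y Ay yx => H.
apply: (le_lt_trans (y := `|L| * (e / (`|L| + 1)))).
  by apply: ler_wpM2l => //; exact: ltW.
rewrite mulrA ltr_pdivrMr //; nra.
Qed.

Lemma withinB' (A : set R) (f g : R -> R) :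
  {within A, continuous f} -> {within A, continuous g} ->
  {within A, continuous (fun x => f x - g x)}.
Proof. exact: within_continuousB. Qed.

Section Gsec.
Variables (gam b : R -> R) (P : R).
Hypothesis Kg : Kinf gam.
Hypothesis Kb : Kinf b.
Hypothesis bder : forall t, 0 < t -> derivable b t 1 /\ 0 < derive1 b t.
Hypothesis bg : forall s, 0 <= s -> b (gam s) = s.
Hypothesis gb : forall t, 0 <= t -> gam (b t) = t.
Hypothesis P0 : 0 < P.
Hypothesis lowD : forall T, 0 < T -> exists2 kap, 0 < kap &
  forall t, 0 < t -> t <= T -> kap * powR t P <= t * derive1 b t.
Variables (Q k M : R).
Hypotheses (PQ : P <= Q) (k0 : 0 < k) (M0 : 0 < M).
Hypothesis l0 : forall t, 0 < t -> t <= 1 -> k * powR t P <= b t.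
Hypothesis loo : forall t, 1 <= t -> k * powR t Q <= b t.
Hypothesis u0 : forall t, 0 < t -> t <= 1 -> t * derive1 b t <= M * powR t P.
Hypothesis uoo : forall t, 1 <= t -> t * derive1 b t <= M * powR t Q.

Definition Gf s := powR (gam s) (P + 1).

Lemma lam_gt1 : 1 < P + 1. Proof. by rewrite ltrDr. Qed.

Lemma Gf_le s s' : 0 <= s -> s <= s' -> Gf s <= Gf s'.
Proof.
move=> s0 ss'; rewrite /Gf; apply: ge0_ler_powR; rewrite ?nnegrE.
- by rewrite ltW // (lt_trans ltr01 lam_gt1).
- exact: Kinf_ge0.
- by apply: Kinf_ge0 => //; rewrite (le_trans s0).
- exact: Kinf_le.
Qed.

Lemma pow_mono (t t' : R) : 0 <= t -> 0 <= t' -> t <= t' -> powR t (P + 1) <= powR t' (P + 1).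
Proof.
move=> t0 t'0 tt'; apply: ge0_ler_powR; rewrite ?nnegrE //.
by rewrite ltW // (lt_trans ltr01 lam_gt1).
Qed.

Lemma pow_incr (T : R) : 0 < T -> exists2 L, 0 <= L &
  forall t t', 0 <= t -> t <= t' -> t' <= T ->
    powR t' (P + 1) - powR t (P + 1) <= L * (b t' - b t).
Proof.
move=> T0.
have [kap kap0 Hk] := lowD T0.
pose L := (P + 1) * T / kap.
have L0 : 0 <= L by rewrite /L divr_ge0 // ?mulr_ge0 // ltW // ?(lt_trans ltr01 lam_gt1).
exists L => // t t' t0 tt' t'T.
pose h x := L * b x - powR x (P + 1).
suff : h t <= h t' by rewrite /h; lra.
apply: (@ger0_derive1_ndecr _ h 0 T) => //.
- move=> x; rewrite in_itv /= => /andP [x0 xT].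
  apply: derivableB; first exact/derivableZ/(bder x0).1.
  by apply: derivable_powR; rewrite in_itv /= x0.
- move=> x; rewrite in_itv /= => /andP [x0 xT].
  have Hb : is_derive x 1 b (derive1 b x).
    by rewrite derive1E; apply: derivableP; exact: (bder x0).1.
  have Hh : is_derive x 1 h (L * derive1 b x - (P + 1) * powR x (P + 1 - 1)).
    have -> : h = (L \*: b) - (fun y => powR y (P + 1)) by apply/funext => y.
    apply: is_deriveB; last exact: is_derive1_powR.
  rewrite derive1E (@derive_val _ _ _ _ _ _ _ Hh) addrK subr_ge0.
  have := Hk x x0 (ltW xT).
  have px := powR_gt0 P x0.
  have db := (bder x0).2.
  move=> Hkx.
  have : (P + 1) * powR x P * x <= L * derive1 b x * x.
    have -> : L * derive1 b x * x = L * (x * derive1 b x) by ring.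
    apply: (le_trans (y := L * (kap * powR x P))); last by apply: ler_wpM2l.
    rewrite /L.
    have -> : (P + 1) * T / kap * (kap * powR x P) = (P + 1) * powR x P * T.
      by field; rewrite gt_eqF.
    apply: ler_wpM2l; last exact: ltW.
    by rewrite mulr_ge0 // ?ltW // (lt_trans ltr01 lam_gt1).
  by rewrite ler_pM2r.
- have c1 : {within `[0, +oo[, continuous h}.
    apply: within_continuousB; first by apply: withinZ; case: Kb.
    exact: powR_within (lt_trans ltr01 lam_gt1).
  apply: continuous_subspaceW c1.
  by move=> x /=; rewrite !in_itv /= => /andP [->].
Qed.

Lemma gam_ge0 s : 0 <= s -> 0 <= gam s.
Proof. exact: Kinf_ge0. Qed.

Lemma G_lip S : 0 <= S -> exists2 L, 0 <= L &
  forall s s', 0 <= s -> s <= S -> 0 <= s' -> s' <= S ->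
    `|Gf s - Gf s'| <= L * `|s - s'|.
Proof.
move=> S0.
have T0 : 0 < gam S + 1 by rewrite ltr_wpDl // gam_ge0.
have [L L0 HL] := pow_incr T0.
have key : forall s s', 0 <= s -> s <= s' -> s' <= S -> Gf s' - Gf s <= L * (s' - s).
  move=> s s' s0 ss' s'S.
  have s'0 : 0 <= s' by rewrite (le_trans s0).
  rewrite /Gf -{2}(bg s0) -{2}(bg s'0).
  apply: HL; first exact: gam_ge0.
    exact: Kinf_le.
  apply: (le_trans (y := gam S)); first exact: Kinf_le.
  by rewrite lerDl.
exists L => // s s' s0 sS s'0 s'S.
have [ss'|s's] := leP s s'.
  rewrite distrC (distrC s) !ger0_norm ?subr_ge0 //; last exact: Gf_le.
  exact: key.
rewrite !ger0_norm ?subr_ge0 ?(ltW s's) //; last by apply: Gf_le => //; exact: ltW.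
by apply: key => //; exact: ltW.
Qed.

Lemma G_der s : 0 < s -> forall eps, 0 < eps -> exists2 del, 0 < del &
  forall s', 0 <= s' -> s' < s -> s - s' < del ->
   ((P + 1) * powR (gam s) P / derive1 b (gam s) - eps) * (s - s') <= Gf s - Gf s'.
Proof.
move=> s0 eps eps0.
have t0 : 0 < gam s.
  by case: (Kg) => g0 _ ginc _; rewrite -g0; apply: ginc.
have [db b'0] := bder t0.
set t := gam s in t0 db b'0 *.
set b' := derive1 b t in b'0 *.
set A := (P + 1) * powR t P.
have A0 : 0 < A by rewrite mulr_gt0 ?powR_gt0 // (lt_trans ltr01 lam_gt1).
set Gd := A / b'.
have Gd0 : 0 < Gd by rewrite divr_gt0.
have GdA : Gd * b' = A by rewrite /Gd mulfVK // gt_eqF.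
set eta := eps * b' / (Gd + 1).
have eta0 : 0 < eta by rewrite divr_gt0 ?mulr_gt0 // ltr_wpDl // ltW.
have etaG : eta * (Gd + 1) = eps * b' by rewrite /eta mulfVK // gt_eqF // ltr_wpDl // ltW.
have [r1 r10 H1] := deriv_eps db eta0.
have dpow : derivable (fun x => powR x (P + 1)) t 1.
  by apply: derivable_powR; rewrite in_itv /= t0.
have [r2 r20 H2] := deriv_eps dpow eta0.
have dpowv : derive1 (fun x => powR x (P + 1)) t = A.
  by rewrite powR_derive1 ?in_itv /= ?t0 // addrK.
rewrite dpowv in H2.
have rho0 : 0 < Num.min r1 r2 by rewrite lt_min r10 r20.
case: (Kg) => _ /withinP Hg _ _.
have [del del0 Hdel] := Hg s (ltac:(by rewrite /= in_itv /= andbT ltW)) _ rho0.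
exists del => // s' s'0 s's sd.
have t'0 : 0 <= gam s' := gam_ge0 s'0.
have t't : gam s' < t by apply: Kinf_lt.
have Hd : `|gam s' - t| < Num.min r1 r2.
  apply: Hdel; first by rewrite /= in_itv /= andbT.
  by rewrite ltr0_norm ?subr_lt0 // opprB.
move: Hd; rewrite lt_min => /andP [Hd1 Hd2].
have := H1 _ Hd1; have := H2 _ Hd2.
rewrite (ltr0_norm (x := gam s' - t)); last by rewrite subr_lt0.
rewrite !bg //; last exact: ltW.
rewrite /Gf -/t.
set t' := gam s' in t'0 t't Hd1 Hd2 *.
rewrite !ler_norml => /andP [Ha1 Ha2] /andP [Hb1 Hb2].
have pm : powR t' (P + 1) <= powR t (P + 1) by apply: pow_mono => //; exact: ltW.
have [Gs|Gs] := leP (Gd - eps) 0.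
  apply: (le_trans (y := 0)); last by rewrite subr_ge0.
  by rewrite mulr_le0_ge0 // subr_ge0 ltW.
have D0 : 0 < t - t' by rewrite subr_gt0.
have h1 : s - s' <= (b' + eta) * (t - t') by rewrite -/b' in Hb1 Hb2; nra.
have h2 : (A - eta) * (t - t') <= powR t (P + 1) - powR t' (P + 1) by nra.
apply: (le_trans (y := (Gd - eps) * ((b' + eta) * (t - t')))).
  by apply: ler_wpM2l => //; exact: ltW.
apply: le_trans h2; rewrite mulrA; apply: ler_wpM2r; first exact: ltW.
have : 0 <= eps * eta by rewrite mulr_ge0 // ltW.
nra.
Qed.

Lemma Gf0 : Gf 0 = 0.
Proof. by rewrite /Gf; case: Kg => -> _ _ _; rewrite powR0 // gt_eqF // (lt_trans ltr01 lam_gt1). Qed.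

Lemma dini_zero n (V : 'rV[R]_n -> R) x v :
  (forall y, 0 <= V y) -> V x = 0 -> (dini V x v <= 0%:E)%E ->
  (dini (fun y => Gf (V y)) x v <= 0%:E)%E.
Proof.
move=> V0 Vx0 Hd; apply/lee_addgt0Pr => e e0; rewrite add0e.
have [LG LG0 HG] := G_lip ler01.
have LG1 : 0 < LG + 1 by rewrite ltr_wpDl.
pose e' := e / (LG + 1).
have e'0 : 0 < e' by rewrite divr_gt0.
have [d d0 Hdd] := esup_lt Hd e'0.
have d'0 : 0 < Num.min d e'^-1 by rewrite lt_min d0 invr_gt0.
apply: (esup_le d'0) => h h0; rewrite lt_min => /andP [hd he].
have := Hdd h h0 hd; rewrite Vx0 subr0 add0r => Hq.
have Vh : V (x + h *: v) < e' * h by rewrite -ltr_pdivrMr // mulrC.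
have Vh1 : V (x + h *: v) <= 1.
  apply: ltW; apply: (lt_le_trans Vh).
  have : h * e' < 1 by rewrite -ltr_pdivlMr // div1r.
  by rewrite mulrC => /ltW.
have := HG (V (x + h *: v)) 0 (V0 _) Vh1 (lexx 0) ler01.
rewrite Gf0 !subr0 (ger0_norm (V0 _)) => HG'.
have Gp : 0 <= Gf (V (x + h *: v)) by rewrite /Gf powR_ge0.
rewrite ler_pdivrMr //.
rewrite ger0_norm // in HG'; apply: (le_trans HG').
apply: (le_trans (y := LG * (e' * h))); first by apply: ler_wpM2l => //; exact: ltW.
rewrite mulrA; apply: ler_wpM2r; first exact: ltW.
rewrite /e' mulrA ler_pdivrMr //; nra.
Qed.

Lemma dini_pos n (V : 'rV[R]_n -> R) x v (c : R) :
  (forall y, 0 <= V y) -> 0 < V x -> c < 0 ->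
  (exists r L, 0 < r /\ forall y z, enorm (y - x) < r -> enorm (z - x) < r ->
      `|V y - V z| <= L * enorm (y - z)) ->
  (dini V x v <= c%:E)%E ->
  (dini (fun y => Gf (V y)) x v <=
     ((P + 1) * powR (gam (V x)) P / derive1 b (gam (V x)) * c)%:E)%E.
Proof.
move=> V0 s0 c0 [r [L [r0 HL]]] Hd.
have t0 : 0 < gam (V x).
  by case: (Kg) => g0 _ ginc _; rewrite -g0; apply: ginc.
have [_ b'0] := bder t0.
set Gd := (P + 1) * powR (gam (V x)) P / derive1 b (gam (V x)).
have Gd0 : 0 < Gd.
  by rewrite divr_gt0 // mulr_gt0 ?powR_gt0 // (lt_trans ltr01 lam_gt1).
apply/lee_addgt0Pr => e e0; rewrite -EFinD.
pose psi := - c.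
have psi0 : 0 < psi by rewrite /psi oppr_gt0.
pose eps := Num.min (Gd / 2) (e / (2 * psi)).
pose eta := Num.min (psi / 2) (e / (2 * Gd)).
have eps0 : 0 < eps by rewrite /eps lt_min; apply/andP; split; apply: divr_gt0 => //; rewrite mulr_gt0.
have eta0 : 0 < eta by rewrite /eta lt_min; apply/andP; split; apply: divr_gt0 => //; rewrite mulr_gt0.
have [del del0 Hdel] := G_der s0 eps0.
have [d1 d10 Hd1] := esup_lt Hd eta0.
pose nv := enorm v + 1.
have nv0 : 0 < nv by rewrite /nv ltr_wpDl // enorm_ge0.
have L1 : 0 < `|L| + 1 by rewrite ltr_wpDl.
pose d2 := Num.min (r / nv) (del / ((`|L| + 1) * nv)).
have d20 : 0 < d2 by rewrite /d2 lt_min; apply/andP; split; apply: divr_gt0 => //; rewrite mulr_gt0.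
have d0 : 0 < Num.min d1 d2 by rewrite lt_min d10 d20.
apply: (esup_le d0) => h h0; rewrite lt_min => /andP [hd1]; rewrite lt_min => /andP [hr hdel].
have Hq := Hd1 h h0 hd1.
set s' := V (x + h *: v) in Hq *.
have ce : c + eta < 0.
  have : eta <= psi / 2 by rewrite /eta ge_min lexx.
  rewrite /psi; lra.
have ss' : s' < (V x).
  have : (s' - (V x)) / h < 0 by apply: lt_trans Hq ce.
  by rewrite pmulr_llt0 ?invr_gt0 // subr_lt0.
have hv : enorm (h *: v) = h * enorm v by rewrite enormZ gtr0_norm.
have hnv : h * enorm v <= h * nv by apply: ler_wpM2l; [exact: ltW | rewrite /nv lerDl].

have Hlip : `|s' - (V x)| <= L * enorm (h *: v).
  have := HL (x + h *: v) x.
  rewrite subrr enorm0 addrAC subrr add0r; apply => //.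
  rewrite hv; apply: (le_lt_trans hnv).
  by rewrite -ltr_pdivlMr.
have sd : (V x) - s' < del.
  have h1 : (V x) - s' <= `|s' - (V x)| by rewrite distrC ler_norm.
  apply: (le_lt_trans h1); apply: (le_lt_trans Hlip).
  rewrite hv.
  apply: (le_lt_trans (y := (`|L| + 1) * (h * nv))).
    have he : 0 <= h * enorm v by rewrite mulr_ge0 ?enorm_ge0 // ltW.
    apply: (le_trans (ler_norm _)); rewrite normrM (ger0_norm he).
    apply: (le_trans (y := `|L| * (h * nv))); first exact: ler_wpM2l.
    apply: ler_wpM2r; [by rewrite mulr_ge0 // ltW | by rewrite lerDl].
  by rewrite mulrCA -ltr_pdivlMr ?mulr_gt0.
have HG := Hdel s' (V0 _) ss' sd.
rewrite -/Gd in HG.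
have Ge : Gd / 2 <= Gd - eps.
  have : eps <= Gd / 2 by rewrite /eps ge_min lexx.
  lra.
have h1 : Gd * eta <= e / 2.
  have : eta <= e / (2 * Gd) by rewrite /eta ge_min lexx orbT.
  move=> H; have := ler_wpM2l (ltW Gd0) H.
  by have -> : Gd * (e / (2 * Gd)) = e / 2 by field; rewrite gt_eqF.
have h2 : eps * psi <= e / 2.
  have : eps <= e / (2 * psi) by rewrite /eps ge_min lexx orbT.
  move=> H; have := ler_wpM2r (ltW psi0) H.
  by have -> : e / (2 * psi) * psi = e / 2 by field; rewrite gt_eqF.
have h3 : 0 <= eps * eta by rewrite mulr_ge0 ?ltW.
have Gep : 0 < Gd - eps by lra.
have step1 : (Gf s' - Gf (V x)) / h <= (Gd - eps) * ((s' - (V x)) / h).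
  rewrite mulrA ler_pM2r ?invr_gt0 //; nra.
apply: (le_trans step1).
apply: (le_trans (y := (Gd - eps) * (c + eta))).
  by apply: ler_wpM2l; [exact: ltW | exact: ltW].
rewrite /psi in h2 psi0; nra.
Qed.

Lemma main_G n m (f : 'rV[R]_n -> 'rV[R]_m -> 'rV[R]_n) (V : 'rV[R]_n -> R) :
  FxT_ISS_Lyapunov f V -> FxT_ISS_Lyapunov f (fun x => powR (gam (V x)) (P + 1)).
Proof.
case=> V0 [Vlip [al [ah [chi [psi [Kal Kah Kchi [c1 [c2 [p1 [p2 [c10 c20 /andP [p10 p11] p21 Hpsi]]]]] [Hbd Hdec]]]]]]].
have lam1 : 1 <= P + 1 by rewrite ltW // lam_gt1.
have lam0 : 0 < P + 1 by rewrite (lt_trans ltr01 lam_gt1).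
split; first by move=> x; exact: powR_ge0.
split.
  move=> x; have [r [L [r0 HL]]] := Vlip x.
  pose S := V x + `|L| * r.
  have S0 : 0 <= S by rewrite /S addr_ge0 ?mulr_ge0 // ltW.
  have [LG LG0 HG] := G_lip S0.
  exists r, (LG * L); split => // y z yx zx.
  have bound : forall w, enorm (w - x) < r -> V w <= S.
    move=> w wx; have := HL w x wx; rewrite subrr enorm0 => /(_ r0) H.
    have H1 : V w - V x <= L * enorm (w - x) := le_trans (ler_norm _) H.
    have H2 : L * enorm (w - x) <= `|L| * r.
      apply: (le_trans (ler_norm _)); rewrite normrM (ger0_norm (enorm_ge0 _)).
      by apply: ler_wpM2l => //; exact: ltW.
    rewrite /S; lra.
  have := HG (V y) (V z) (V0 _) (bound y yx) (V0 _) (bound z zx).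
  move=> /le_trans; apply; rewrite -mulrA; apply: ler_wpM2l => //.
  exact: HL.
pose ct := cct P k M c1 c2 p1 p2.
pose q1 := qq1 P p1.
pose q2 := qq2 P Q p2.
have P0' : 0 < Q by rewrite (lt_le_trans P0).
have ct0 : 0 < ct.
  rewrite /ct /cct; apply: divr_gt0; last by rewrite mulr_gt0.
  by rewrite lt_min; apply/andP; split; rewrite !mulr_gt0 ?powR_gt0.
have q10 : 0 < q1.
  rewrite /q1 /qq1 subr_gt0 ltr_pdivrMr // mul1r.
  have : P * (1 - p1) < P by rewrite gtr_pMr // ltrBlDr ltrDl.
  lra.
have q11 : q1 < 1.
  by rewrite /q1 /qq1 ltrBlDr ltrDl divr_gt0 // mulr_gt0 // subr_gt0.
have q21 : 1 < q2.
  by rewrite /q2 /qq2 ltrDl divr_gt0 // mulr_gt0 // subr_gt0.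
exists (fun s => powR (gam (al s)) (P + 1)), (fun s => powR (gam (ah s)) (P + 1)),
  (fun s => powR (gam (chi s)) (P + 1)), (fun w => ct * powR w q1 + ct * powR w q2).
split.
- exact: Kinf_comp.
- exact: Kinf_comp.
- exact: Kinf_comp.
- exists ct, ct, q1, q2; split => //; by rewrite q10 q11.
split.
  move=> x; have [h1 h2] := Hbd x; split.
    by apply: Gf_le => //; apply: Kinf_ge0 => //; exact: enorm_ge0.
  exact: Gf_le.
move=> x u Hc.
have Hc' : chi (enorm u) <= V x.
  rewrite leNgt; apply/negP => H.
  have : Gf (V x) < Gf (chi (enorm u)).
    rewrite /Gf; apply: gt0_ltr_powR => //; rewrite ?nnegrE.
    - by apply: gam_ge0.
    - by apply: gam_ge0; apply: Kinf_ge0 => //; exact: enorm_ge0.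
    - exact: Kinf_lt.
  by rewrite ltNge; move: Hc; rewrite /Gf => ->.
have Hd := Hdec x u Hc'.
have [Vx0|Vxp] := eqVneq (V x) 0.
  have p0 : psi (V x) = 0.
    rewrite Hpsi ?Vx0 // !powR0 ?mulr0 ?addr0 // gt_eqF //; exact: (lt_trans ltr01 p21).
  rewrite p0 oppr0 in Hd.
  have := dini_zero V0 Vx0 Hd.
  move/le_trans; apply; rewrite lee_fin.
  rewrite Vx0; case: (Kg) => -> _ _ _; rewrite powR0 ?gt_eqF //.
  by rewrite !powR0 ?gt_eqF ?(lt_trans ltr01 q21) // mulr0 addr0 oppr0.
have s0 : 0 < V x by rewrite lt_neqAle eq_sym Vxp V0.
have ps0 : 0 < psi (V x).
  by rewrite Hpsi ?V0 // ltr_wpDr ?mulr_ge0 ?powR_ge0 ?ltW // mulr_gt0 // powR_gt0.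
have := dini_pos V0 s0 _ (Vlip x) Hd.
rewrite oppr_lt0 => /(_ ps0) /le_trans; apply; rewrite lee_fin.
set t := gam (V x).
have t0 : 0 < t.
  by case: (Kg) => g0 _ ginc _; rewrite -g0; apply: ginc.
have [_ b'0] := bder t0.
have Dt0 : 0 <= t * derive1 b t by rewrite mulr_ge0 ?ltW.
have := psi_bound P0 PQ k0 M0 c10 c20 p10 p11 p21 l0 loo u0 uoo t0 Dt0.
rewrite /t bg; last exact: V0.
rewrite -Hpsi; last exact: V0.
rewrite -/t -/ct -/q1 -/q2.
set W := ct * _ + ct * _.
move=> H.
have tl : powR t (P + 1) = powR t P * t.
  by rewrite powRD ?powRr1 ?ltW // gt_eqF // implybT.
rewrite tl in H.
rewrite mulrN lerN2 mulrAC ler_pdivlMr // -(ler_pM2r t0).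
have -> : W * derive1 b t * t = t * derive1 b t * W by ring.
have -> : (P + 1) * powR t P * psi (V x) * t = (P + 1) * (powR t P * t) * psi (V x) by ring.
exact: H.
Qed.

End Gsec.

End H5.

Local Close Scope classical_set_scope.

Theorem lemma8 (R : realType) (n m : nat)
  (f : 'rV[R]_n -> 'rV[R]_m -> 'rV[R]_n)
  (Hf : continuous (fun p : 'rV[R]_n * 'rV[R]_m => f p.1 p.2))
  (Hf0 : f 0 0 = 0)
  (V : 'rV[R]_n -> R)
  (HV : FxT_ISS_Lyapunov f V)
  (gamma : R -> R) (Hgamma : KPinv gamma) :
  exists2 lam : R, 1 <= lam &
    FxT_ISS_Lyapunov f (fun x => powR (gamma (V x)) lam).
Proof.
case: Hgamma => Kg [b KPb [bg gb]].
have [P [Q [k [M [P0 PQ k0 M0 [l0 loo u0 uoo lowD]]]]]] := GP KPb.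
case: (KPb) => Kb [N [c [p [_ _ _ bder]]]].
exists (P + 1); first by rewrite lerDr ltW.
exact: (main_G Kg Kb bder bg P0 lowD PQ k0 M0 l0 loo u0 uoo HV).
Qed.
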